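(* Fix $\alpha>1$, $R>0$, $N_0,B,T_c>0$ with $T=BT_c>1$, and $p_r,p_d,p_s,C_0>0$. Let $\beta=p_d/p_r$, $\delta=p_s/p_r$, $\mu=C_0B/p_r$ and $K_{max}=\min\big(\frac T4,\frac1{3\mu},\frac{3\beta}{2\mu}\big)$, and assume $K_{max}>10$. For $G_c>0$ let $\Theta(G_c)=(\alpha,\rho_r,\rho_d,\rho_s,\rho_0,T)$ with $\rho_r=\frac{G_cp_r}{N_0B}$, $\rho_d=\frac{G_cp_d}{N_0B}$, $\rho_s=\frac{G_cp_s}{N_0B}$, $\rho_0=\frac{G_cC_0}{N_0}$, and let $\eta'_{csi}(G_c)=\frac{G_c}{N_0}\zeta'_{csi}(R,\Theta(G_c))$. Then for every $G_c$ satisfying $$G_c>\frac{N_0B}{p_r}\frac{\alpha}{2\delta},\quad G_c>\frac{N_0B}{p_r}\frac{3\alpha}{4(1+\beta)^2R}g^2\Big(\frac{4R}{3K_{max}}\Big),\quad G_c<\frac{N_0B}{p_r}\frac{\alpha}{(1+\beta)^2R}g^2(R),$$ we have $\frac{\partial\eta'_{csi}}{\partial G_c}>0$.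
   Context: $g(x)=\sqrt{\frac{x}{2^x-1}}\big(2^x x\ln2-2^x+1\big)$, $x>0$. For $\Theta=(\alpha,\rho_r,\rho_d,\rho_s,\rho_0,T)$ and real $M>K\ge1$, $\frac{1}{\zeta_{csi}(M,K,R,\Theta)}=\frac1R\big[\frac{\alpha K}{M-K}(2^{R/K}-1)+M\rho_r+K\rho_d+\rho_s\big]$, and $\zeta'_{csi}(R,\Theta)$ is the maximum of $\zeta_{csi}(M,K,R,\Theta)$ over real $(M,K)$ with $1\le K\le \min\big(\frac T4,\frac{\rho_r}{3\rho_0},\frac{3\rho_d}{2\rho_0}\big)$, $M>K$ (note this upper limit equals $K_{max}$ above, independent of $G_c$). *)

(* Defs.v *)
From Stdlib Require Import Reals.
From Coquelicot Require Import Coquelicot.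
Open Scope R_scope.

Definition pow2 (x : R) : R := Rpower 2 x.

Definition g (x : R) : R :=
  sqrt (x / (pow2 x - 1)) * (pow2 x * x * ln 2 - pow2 x + 1).

Definition inv_zeta_csi (M K Rt alpha rr rd rs : R) : R :=
  / Rt * (alpha * K / (M - K) * (pow2 (Rt / K) - 1) + M * rr + K * rd + rs).

Definition zeta_csi (M K Rt alpha rr rd rs : R) : R :=
  / inv_zeta_csi M K Rt alpha rr rd rs.

Definition K_upper (rr rd r0 T : R) : R :=
  Rmin (Rmin (T / 4) (rr / (3 * r0))) (3 * rd / (2 * r0)).

Definition zeta_values (Rt alpha rr rd rs r0 T : R) (z : R) : Prop :=
  exists M K : R, 1 <= K /\ K <= K_upper rr rd r0 T /\ M > K /\
    z = zeta_csi M K Rt alpha rr rd rs.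

(* zeta'_csi(R,Theta): the maximum (taken as the supremum) of zeta_csi over
   the feasible real (M,K). *)
Definition zeta'_csi (Rt alpha rr rd rs r0 T : R) : R :=
  real (Lub_Rbar (zeta_values Rt alpha rr rd rs r0 T)).

Definition eta'_csi (Rt alpha N0 B T pr pd ps C0 : R) (Gc : R) : R :=
  Gc / N0 * zeta'_csi Rt alpha (Gc * pr / (N0 * B)) (Gc * pd / (N0 * B))
                       (Gc * ps / (N0 * B)) (Gc * C0 / N0) T.

Definition K_max (T beta mu : R) : R :=
  Rmin (Rmin (T / 4) (1 / (3 * mu))) (3 * beta / (2 * mu)).

(* Main.v *)
Require Import Defs.
From Stdlib Require Import Reals Lra Psatz.
From Coquelicot Require Import Coquelicot.
Open Scope R_scope.

Definition E2 (x : R) : R := exp (x * ln 2).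
Definition pp (x : R) : R := x * E2 x * ln 2 - E2 x + 1.
Definition hh (x : R) : R := pp x ^ 2 / (E2 x - 1).
Definition phi (x : R) : R := x * hh x.

Lemma pow2_E2 (x : R) : Defs.pow2 x = E2 x.
Proof. reflexivity. Qed.

Lemma ln2_pos : 0 < ln 2.
Proof. pose proof ln_lt_2; lra. Qed.

Lemma E2_gt1 (x : R) : 0 < x -> 1 < E2 x.
Proof.
  intros Hx. unfold E2. pose proof ln2_pos.
  assert (0 < x * ln 2) by nra.
  pose proof (exp_ineq1 (x * ln 2)). lra.
Qed.

Lemma E2_pos (x : R) : 0 < E2 x.
Proof. apply exp_pos. Qed.

Lemma pp_pos (x : R) : 0 < x -> 0 < pp x.
Proof.
  intros Hx. unfold pp, E2. pose proof ln2_pos.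
  set (y := x * ln 2).
  assert (Hy : 0 < y) by (unfold y; nra).
  assert (H1 : 1 + - y < exp (- y)) by (apply exp_ineq1; lra).
  assert (H2 : exp y * exp (- y) = 1).
  { rewrite <- exp_plus. replace (y + - y) with 0 by ring. apply exp_0. }
  pose proof (exp_pos y).
  replace (x * exp y * ln 2) with (y * exp y) by (unfold y; ring).
  nra.
Qed.

Definition hh' (x : R) : R :=
  pp x * E2 x * ln 2 * (2 * x * ln 2 * (E2 x - 1) - pp x) / (E2 x - 1) ^ 2.

Lemma hh_derive (x : R) : 0 < x -> is_derive hh x (hh' x).
Proof.
  intros Hx. pose proof (E2_gt1 x Hx).
  unfold hh, hh', pp, E2 in *.
  auto_derive.
  - lra.
  - field. lra.
Qed.

Lemma hh'_pos (x : R) : 0 < x -> 0 < hh' x.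
Proof.
  intros Hx. pose proof (E2_gt1 x Hx). pose proof (pp_pos x Hx). pose proof ln2_pos.
  unfold hh'.
  assert (0 < 2 * x * ln 2 * (E2 x - 1) - pp x).
  { unfold pp. set (y := x * ln 2).
    assert (Hy : 0 < y) by (unfold y; nra).
    assert (Hey : 1 + y < E2 x) by (unfold E2, y; apply exp_ineq1; unfold y in Hy; lra).
    replace (2 * x * ln 2 * (E2 x - 1) - (x * E2 x * ln 2 - E2 x + 1))
      with (E2 x * (1 + y) - (1 + 2 * y)) by (unfold y; ring).
    nra. }
  apply Rdiv_lt_0_compat.
  - pose proof (E2_pos x).
    repeat apply Rmult_lt_0_compat; lra.
  - apply pow_lt; lra.
Qed.

Lemma hh_pos (x : R) : 0 < x -> 0 < hh x.
Proof.
  intros Hx. unfold hh. pose proof (E2_gt1 x Hx). pose proof (pp_pos x Hx).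
  apply Rdiv_lt_0_compat; [apply pow_lt|]; lra.
Qed.

Lemma hh_incr (a b : R) : 0 < a -> a < b -> hh a < hh b.
Proof.
  intros Ha Hab.
  destruct (MVT_cor2 hh hh' a b Hab) as [c [Hc1 Hc2]].
  { intros c Hc. apply is_derive_Reals. apply hh_derive. lra. }
  assert (0 < hh' c) by (apply hh'_pos; lra).
  nra.
Qed.

Lemma phi_incr (a b : R) : 0 < a -> a < b -> phi a < phi b.
Proof.
  intros Ha Hab. unfold phi. pose proof (hh_incr a b Ha Hab). pose proof (hh_pos a Ha).
  nra.
Qed.

Lemma phi_g (x : R) : 0 < x -> phi x = g x ^ 2.
Proof.
  intros Hx. pose proof (E2_gt1 x Hx).
  unfold phi, hh, g. change (Defs.pow2 x) with (E2 x).
  replace (E2 x * x * ln 2 - E2 x + 1) with (pp x) by (unfold pp; ring).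
  rewrite Rpow_mult_distr, pow2_sqrt.
  - field. lra.
  - apply Rlt_le, Rdiv_lt_0_compat; lra.
Qed.

Definition Qf (Rt K : R) : R := sqrt (K * (E2 (Rt / K) - 1)).
Definition Qf' (Rt K : R) : R := - pp (Rt / K) / (2 * Qf Rt K).
Definition FF (Rt kap ps s K : R) : R := 2 * s * Qf Rt K + kap * K + ps.
Definition FF' (Rt kap s K : R) : R := 2 * s * Qf' Rt K + kap.
Definition psi (Rt s kap K : R) : R := s ^ 2 * phi (Rt / K) - kap ^ 2 * Rt.

Lemma Qarg_pos (Rt K : R) : 0 < Rt -> 0 < K -> 0 < K * (E2 (Rt / K) - 1).
Proof.
  intros. assert (0 < Rt / K) by (apply Rdiv_lt_0_compat; lra).
  pose proof (E2_gt1 _ H1). nra.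
Qed.

Lemma Qf_pos (Rt K : R) : 0 < Rt -> 0 < K -> 0 < Qf Rt K.
Proof. intros. unfold Qf. apply sqrt_lt_R0, Qarg_pos; auto. Qed.

Lemma Qf_ge0 (Rt K : R) : 0 <= Qf Rt K.
Proof. apply sqrt_pos. Qed.

Lemma Qf_sq (Rt K : R) : 0 < Rt -> 0 < K -> Qf Rt K ^ 2 = K * (E2 (Rt / K) - 1).
Proof. intros. unfold Qf. apply pow2_sqrt. apply Rlt_le, Qarg_pos; auto. Qed.

Lemma Qf_derive (Rt K : R) : 0 < Rt -> 0 < K -> is_derive (Qf Rt) K (Qf' Rt K).
Proof.
  intros HR HK. pose proof (Qarg_pos Rt K HR HK). pose proof (Qf_pos Rt K HR HK).
  unfold Qf', pp. unfold Qf in *. unfold E2 in *.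
  auto_derive.
  - split; [lra|]. split; [|exact I]. exact H.
  - change (Rt * / K) with (Rt / K). change (exp (Rt / K * ln 2) + - (1)) with (exp (Rt / K * ln 2) - 1). field. split; lra.
Qed.

Lemma FF_derive (Rt kap ps s K : R) : 0 < Rt -> 0 < K ->
  is_derive (FF Rt kap ps s) K (FF' Rt kap s K).
Proof.
  intros HR HK. pose proof (Qf_derive Rt K HR HK) as HQ.
  unfold FF, FF'.
  auto_derive.
  - exists (Qf' Rt K). exact HQ.
  - replace (Derive (fun x : R => Qf Rt x) K) with (Qf' Rt K) by (symmetry; apply is_derive_unique; exact HQ). ring.
Qed.

Lemma FF'_sign (Rt kap s K : R) : 0 < Rt -> 0 < K -> 0 < s -> 0 < kap ->
  (0 < psi Rt s kap K -> FF' Rt kap s K < 0) /\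
  (psi Rt s kap K < 0 -> 0 < FF' Rt kap s K).
Proof.
  intros HR HK Hs Hk.
  assert (Hx : 0 < Rt / K) by (apply Rdiv_lt_0_compat; lra).
  pose proof (E2_gt1 _ Hx) as He. pose proof (pp_pos _ Hx) as Hp.
  pose proof (Qf_pos Rt K HR HK) as HQ. pose proof (Qf_sq Rt K HR HK) as HQ2.
  unfold psi, FF', Qf', phi, hh.
  set (P := pp (Rt / K)) in *. set (e := E2 (Rt / K)) in *. set (Q := Qf Rt K) in *.
  assert (Hid1 : s ^ 2 * P ^ 2 = s ^ 2 * (Rt / K * (P ^ 2 / (e - 1))) * (K * (e - 1) / Rt))
    by (field; lra).
  assert (Hid2 : kap ^ 2 * Q ^ 2 = kap ^ 2 * Rt * (K * (e - 1) / Rt))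
    by (rewrite HQ2; field; lra).
  assert (Hpos : 0 < K * (e - 1) / Rt) by (apply Rdiv_lt_0_compat; nra).
  assert (Hid3 : 2 * s * (- P / (2 * Q)) + kap = (kap * Q - s * P) / Q) by (field; lra).
  rewrite Hid3. split; intros H.
  - assert (s ^ 2 * P ^ 2 > kap ^ 2 * Q ^ 2).
    { rewrite Hid1, Hid2. apply Rmult_lt_compat_r; lra. }
    assert (0 < s * P) by (apply Rmult_lt_0_compat; lra).
    assert (0 < kap * Q) by (apply Rmult_lt_0_compat; lra).
    assert (kap * Q - s * P < 0).
    { destruct (Rlt_or_le (kap * Q - s * P) 0) as [h|h]; [exact h|].
      exfalso. assert ((kap*Q - s*P) * (kap*Q + s*P) >= 0) by (apply Rle_ge, Rmult_le_pos; lra).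
      nra. }
    apply Rdiv_neg_pos; lra.
  - assert (s ^ 2 * P ^ 2 < kap ^ 2 * Q ^ 2).
    { rewrite Hid1, Hid2. apply Rmult_lt_compat_r; lra. }
    assert (0 < s * P) by (apply Rmult_lt_0_compat; lra).
    assert (0 < kap * Q) by (apply Rmult_lt_0_compat; lra).
    assert (0 < kap * Q - s * P).
    { destruct (Rlt_or_le 0 (kap * Q - s * P)) as [h|h]; [exact h|].
      exfalso. assert ((s*P - kap*Q) * (kap*Q + s*P) >= 0) by (apply Rle_ge, Rmult_le_pos; lra).
      nra. }
    apply Rdiv_lt_0_compat; lra.
Qed.

Lemma psi_decr (Rt s kap a b : R) : 0 < Rt -> 0 < s -> 0 < a -> a < b ->
  psi Rt s kap b < psi Rt s kap a.
Proof.
  intros HR Hs Ha Hab. unfold psi.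
  assert (Rt / b < Rt / a).
  { apply Rmult_lt_compat_l; [lra|]. apply Rinv_lt_contravar; nra. }
  assert (0 < Rt / b) by (apply Rdiv_lt_0_compat; lra).
  pose proof (phi_incr _ _ H0 H).
  assert (0 < s ^ 2) by (apply pow_lt; lra).
  nra.
Qed.

Lemma psi_cont (Rt s kap K : R) : 0 < Rt -> 0 < K -> continuity_pt (psi Rt s kap) K.
Proof.
  intros HR HK. apply continuity_pt_filterlim. refine (ex_derive_continuous (K:=R_AbsRing) (V:=R_NormedModule) (psi Rt s kap) K _).
  assert (Hx : 0 < Rt / K) by (apply Rdiv_lt_0_compat; lra).
  pose proof (E2_gt1 _ Hx) as He.
  unfold psi, phi, hh, pp, E2 in *.
  auto_derive. repeat split; try lra.
Qed.

Lemma K0_exists (Rt s kap Km : R) : 0 < Rt -> 0 < s -> 1 < Km ->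
  0 < psi Rt s kap 1 -> psi Rt s kap Km < 0 ->
  exists K0, 1 < K0 < Km /\ psi Rt s kap K0 = 0.
Proof.
  intros HR Hs HKm H1 H2.
  destruct (Ranalysis5.IVT_interv (fun K => - psi Rt s kap K) 1 Km) as [z [Hz Hz0]].
  - intros a Ha. apply continuity_pt_opp. apply psi_cont; lra.
  - lra.
  - lra.
  - lra.
  - exists z. assert (psi Rt s kap z = 0) by lra.
    split; [|auto]. destruct Hz as [Hz1 Hz2].
    split.
    + destruct Hz1 as [h|h]; [exact h|]. subst z. lra.
    + destruct Hz2 as [h|h]; [exact h|]. subst z. lra.
Qed.

Lemma f_decr (Rt kap ps s K0 a b : R) : 0 < Rt -> 0 < s -> 0 < kap ->
  psi Rt s kap K0 = 0 -> 0 < a -> a < b -> b <= K0 ->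
  FF Rt kap ps s b < FF Rt kap ps s a.
Proof.
  intros HR Hs Hk H0 Ha Hab Hb.
  destruct (MVT_cor2 (FF Rt kap ps s) (FF' Rt kap s) a b Hab) as [c [Hc1 Hc2]].
  { intros c Hc. apply is_derive_Reals. apply FF_derive; lra. }
  assert (0 < psi Rt s kap c).
  { rewrite <- H0. apply psi_decr; lra. }
  destruct (FF'_sign Rt kap s c HR ltac:(lra) Hs Hk) as [Hn _].
  specialize (Hn H). nra.
Qed.

Lemma f_incr (Rt kap ps s K0 a b : R) : 0 < Rt -> 0 < s -> 0 < kap ->
  psi Rt s kap K0 = 0 -> 0 < K0 -> K0 <= a -> a < b ->
  FF Rt kap ps s a < FF Rt kap ps s b.
Proof.
  intros HR Hs Hk H0 HK0 Ha Hab.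
  destruct (MVT_cor2 (FF Rt kap ps s) (FF' Rt kap s) a b Hab) as [c [Hc1 Hc2]].
  { intros c Hc. apply is_derive_Reals. apply FF_derive; lra. }
  assert (psi Rt s kap c < 0).
  { rewrite <- H0. apply psi_decr; lra. }
  destruct (FF'_sign Rt kap s c HR ltac:(lra) Hs Hk) as [_ Hn].
  specialize (Hn H). nra.
Qed.

Lemma f_min (Rt kap ps s K0 K : R) : 0 < Rt -> 0 < s -> 0 < kap ->
  psi Rt s kap K0 = 0 -> 0 < K0 -> 0 < K ->
  FF Rt kap ps s K0 <= FF Rt kap ps s K.
Proof.
  intros. destruct (Rtotal_order K K0) as [h|[h|h]].
  - left. apply (f_decr Rt kap ps s K0); lra.
  - subst; lra.
  - left. apply (f_incr Rt kap ps s K0); lra.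
Qed.

Lemma loc_lip (f : R -> R) (x l : R) : is_derive f x l ->
  exists d, 0 < d /\ forall y, Rabs (y - x) < d ->
    Rabs (f y - f x) <= (Rabs l + 1) * Rabs (y - x).
Proof.
  intros H. apply is_derive_Reals in H.
  destruct (H 1 Rlt_0_1) as [del Hdel].
  exists del. split; [apply cond_pos|].
  intros y Hy.
  destruct (Req_dec y x) as [e|ne].
  - subst. replace (x - x) with 0 by ring. replace (f x - f x) with 0 by ring.
    rewrite Rabs_R0. lra.
  - assert (hne : y - x <> 0) by lra.
    specialize (Hdel (y - x) hne Hy).
    replace (x + (y - x)) with y in Hdel by ring.
    assert (Hh : 0 < Rabs (y - x)) by (apply Rabs_pos_lt; auto).
    replace (f y - f x) with (((f y - f x) / (y - x) - l) * (y - x) + l * (y - x))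
      by (field; auto).
    eapply Rle_trans; [apply Rabs_triang|].
    rewrite !Rabs_mult. nra.
Qed.

Lemma E2_le (a b : R) : a <= b -> E2 a <= E2 b.
Proof.
  intros H. unfold E2. pose proof ln2_pos.
  destruct (Rle_lt_or_eq_dec _ _ H) as [h|h].
  - left. apply exp_increasing. nra.
  - subst. lra.
Qed.

Lemma Qf_bound (Rt Km K : R) : 0 < Rt -> 1 <= K <= Km ->
  Qf Rt K <= sqrt (Km * E2 Rt).
Proof.
  intros HR HK. unfold Qf. apply sqrt_le_1_alt.
  assert (E2 (Rt / K) <= E2 Rt).
  { apply E2_le. unfold Rdiv. rewrite <- (Rmult_1_r Rt) at 2.
    apply Rmult_le_compat_l; [lra|].
    rewrite <- Rinv_1. apply Rinv_le_contravar; lra. }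
  pose proof (E2_pos (Rt / K)). pose proof (E2_pos Rt). nra.
Qed.

Lemma core (Rt kap ps s0 K0 Km : R) : 0 < Rt -> 0 < s0 -> 0 < kap ->
  psi Rt s0 kap K0 = 0 -> 1 < K0 < Km ->
  forall eta, 0 < eta -> exists del, 0 < del /\
    forall s K, Rabs (s - s0) < del -> 1 <= K <= Km ->
      FF Rt kap ps s K0 - 2 * eta * Rabs (s - s0) <= FF Rt kap ps s K.
Proof.
  intros HR Hs Hk Hpsi HK0 eta Heta.
  destruct (loc_lip (Qf Rt) K0 (Qf' Rt K0) (Qf_derive Rt K0 HR ltac:(lra))) as [d1 [Hd1 Hlip]].
  set (L := Rabs (Qf' Rt K0) + 1).
  assert (HL : 0 < L) by (unfold L; pose proof (Rabs_pos (Qf' Rt K0)); lra).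
  set (th := Rmin (Rmin d1 (eta / L)) (Rmin ((K0 - 1) / 2) ((Km - K0) / 2))).
  assert (Hth : 0 < th).
  { unfold th. apply Rmin_glb_lt; apply Rmin_glb_lt; try lra.
    apply Rdiv_lt_0_compat; lra. }
  assert (Hth1 : th <= d1) by (unfold th; eapply Rle_trans; [apply Rmin_l|apply Rmin_l]).
  assert (Hth2 : th <= eta / L) by (unfold th; eapply Rle_trans; [apply Rmin_l|apply Rmin_r]).
  assert (Hth3 : th <= (K0 - 1) / 2) by (unfold th; eapply Rle_trans; [apply Rmin_r|apply Rmin_l]).
  assert (Hth4 : th <= (Km - K0) / 2) by (unfold th; eapply Rle_trans; [apply Rmin_r|apply Rmin_r]).
  set (f := FF Rt kap ps s0).
  set (d := Rmin (f (K0 - th) - f K0) (f (K0 + th) - f K0)).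
  assert (Hd : 0 < d).
  { unfold d, f. apply Rmin_glb_lt.
    - pose proof (f_decr Rt kap ps s0 K0 (K0 - th) K0 HR Hs Hk Hpsi ltac:(lra) ltac:(lra) ltac:(lra)). lra.
    - pose proof (f_incr Rt kap ps s0 K0 K0 (K0 + th) HR Hs Hk Hpsi ltac:(lra) ltac:(lra) ltac:(lra)). lra. }
  set (Qb := sqrt (Km * E2 Rt) + Qf Rt K0).
  assert (HQb : 0 <= Qb) by (unfold Qb; pose proof (sqrt_pos (Km * E2 Rt)); pose proof (Qf_ge0 Rt K0); lra).
  exists (d / (2 * (Qb + 1))). split.
  { apply Rdiv_lt_0_compat; lra. }
  intros s K Hsd HK.
  assert (Hid : FF Rt kap ps s K - FF Rt kap ps s K0 =
     (f K - f K0) + 2 * (s - s0) * (Qf Rt K - Qf Rt K0)) by (unfold f, FF; ring).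
  assert (Hmin : f K0 <= f K) by (unfold f; apply (f_min Rt kap ps s0 K0 K); lra).
  assert (Htr : - (2 * Rabs (s - s0) * Rabs (Qf Rt K - Qf Rt K0)) <= 2 * (s - s0) * (Qf Rt K - Qf Rt K0)).
  { pose proof (Rle_abs (- (2 * (s - s0) * (Qf Rt K - Qf Rt K0)))).
    rewrite Rabs_Ropp, !Rabs_mult in H. rewrite (Rabs_pos_eq 2) in H by lra. lra. }
  pose proof (Rabs_pos (s - s0)) as Has.
  destruct (Rlt_or_le (Rabs (K - K0)) th) as [Hnear|Hfar].
  - assert (HQ : Rabs (Qf Rt K - Qf Rt K0) <= eta).
    { eapply Rle_trans; [apply Hlip; lra|].
      fold L. apply Rle_trans with (L * (eta / L)).
      + apply Rmult_le_compat_l; lra.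
      + right. field. lra. }
    assert (2 * Rabs (s - s0) * Rabs (Qf Rt K - Qf Rt K0) <= 2 * eta * Rabs (s - s0)) by nra.
    lra.
  - assert (HD : d <= f K - f K0).
    { destruct (Rle_or_lt K K0) as [hK|hK].
      + assert (K <= K0 - th).
        { rewrite Rabs_left1 in Hfar by lra. lra. }
        assert (f (K0 - th) <= f K).
        { destruct (Rle_lt_or_eq_dec _ _ H) as [h|h].
          - left. unfold f. apply (f_decr Rt kap ps s0 K0); lra.
          - rewrite h. lra. }
        assert (d <= f (K0 - th) - f K0) by (unfold d; apply Rmin_l). lra.
      + assert (K0 + th <= K).
        { rewrite Rabs_right in Hfar by lra. lra. }
        assert (f (K0 + th) <= f K).
        { destruct (Rle_lt_or_eq_dec _ _ H) as [h|h].
          - left. unfold f. apply (f_incr Rt kap ps s0 K0); lra.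
          - rewrite h. lra. }
        assert (d <= f (K0 + th) - f K0) by (unfold d; apply Rmin_r). lra. }
    assert (HQ : Rabs (Qf Rt K - Qf Rt K0) <= Qb).
    { pose proof (Qf_bound Rt Km K HR HK). pose proof (Qf_ge0 Rt K). pose proof (Qf_ge0 Rt K0).
      unfold Qb. apply Rabs_le. lra. }
    assert (2 * Rabs (s - s0) * Rabs (Qf Rt K - Qf Rt K0) <= d).
    { apply Rle_trans with (2 * (d / (2 * (Qb + 1))) * Qb).
      - pose proof (Rabs_pos (Qf Rt K - Qf Rt K0)).
        apply Rmult_le_compat; try lra. 
      - apply Rle_trans with (2 * (d / (2 * (Qb + 1))) * (Qb + 1)).
        + apply Rmult_le_compat_l; [|lra]. apply Rlt_le, Rmult_lt_0_compat; [lra|].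
          apply Rdiv_lt_0_compat; lra.
        + right. field. lra. }
    nra.
Qed.

Definition sG (alpha pr N0 B G : R) : R := sqrt (alpha * pr * N0 * B / G).

Lemma amgm (a b t m : R) : 0 < b -> 0 < t -> m ^ 2 = a * b -> 2 * m <= a / t + b * t.
Proof.
  intros Hb Ht Hm.
  assert (Ha : a = m ^ 2 / b) by (rewrite Hm; field; lra).
  subst a.
  assert (m ^ 2 / b / t + b * t - 2 * m = (b * t - m) ^ 2 / (b * t)) by (field; lra).
  assert (0 <= (b * t - m) ^ 2 / (b * t)).
  { apply Rdiv_le_0_compat. apply pow2_ge_0. nra. }
  lra.
Qed.

Lemma zeta_val (alpha Rt N0 B pr pd ps G M K : R) :
  alpha > 0 -> Rt > 0 -> N0 > 0 -> B > 0 -> pr > 0 -> pd > 0 -> ps > 0 -> G > 0 ->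
  1 <= K -> M > K ->
  G / N0 * zeta_csi M K Rt alpha (G * pr / (N0 * B)) (G * pd / (N0 * B)) (G * ps / (N0 * B))
  <= B * Rt / FF Rt (pr + pd) ps (sG alpha pr N0 B G) K /\
  (M = K + sG alpha pr N0 B G * Qf Rt K / pr ->
  G / N0 * zeta_csi M K Rt alpha (G * pr / (N0 * B)) (G * pd / (N0 * B)) (G * ps / (N0 * B))
  = B * Rt / FF Rt (pr + pd) ps (sG alpha pr N0 B G) K).
Proof.
  intros Ha HR HN HB Hpr Hpd Hps HG HK HM.
  set (s := sG alpha pr N0 B G).
  set (c := G / (N0 * B)).
  assert (Hc : 0 < c) by (unfold c; apply Rdiv_lt_0_compat; nra).
  assert (Hs2 : s ^ 2 = alpha * pr * N0 * B / G).
  { unfold s, sG. apply pow2_sqrt. apply Rlt_le, Rdiv_lt_0_compat; [|lra].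
    repeat apply Rmult_lt_0_compat; lra. }
  assert (Hs : 0 < s).
  { unfold s, sG. apply sqrt_lt_R0. apply Rdiv_lt_0_compat; [|lra].
    repeat apply Rmult_lt_0_compat; lra. }
  pose proof (Qf_pos Rt K HR ltac:(lra)) as HQ.
  pose proof (Qf_sq Rt K HR ltac:(lra)) as HQ2.
  set (Q := Qf Rt K) in *.
  set (F := FF Rt (pr + pd) ps s K).
  assert (HF : 0 < F).
  { unfold F, FF. fold Q. nra. }
  unfold zeta_csi, inv_zeta_csi. rewrite pow2_E2.
  set (e := E2 (Rt / K)) in *.
  set (Dn := alpha * K / (M - K) * (e - 1) + M * (G * pr / (N0 * B)) + K * (G * pd / (N0 * B)) + G * ps / (N0 * B)).
  assert (Hm : (c * s * Q) ^ 2 = (alpha * K * (e - 1)) * (c * pr)).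
  { replace ((c * s * Q) ^ 2) with (c ^ 2 * s ^ 2 * Q ^ 2) by ring.
    rewrite Hs2, HQ2. unfold c. field. lra. }
  assert (HDn : Dn - c * F = (alpha * K * (e - 1) / (M - K) + c * pr * (M - K)) - 2 * (c * s * Q)).
  { unfold Dn, F, FF, c. fold Q. field. split; lra. }
  assert (Hge : c * F <= Dn).
  { pose proof (amgm (alpha * K * (e - 1)) (c * pr) (M - K) (c * s * Q)
       ltac:(nra) ltac:(lra) Hm). lra. }
  assert (HcF : 0 < c * F) by nra.
  assert (Heq : G / N0 * / (/ Rt * Dn) = B * Rt * (c / Dn)).
  { unfold c. field. split; [lra|]. split; [lra|]. split; [lra|]. lra. }
  assert (Heq2 : B * Rt / F = B * Rt * (c / (c * F))) by (field; lra).
  rewrite Heq, Heq2. split.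
  - apply Rmult_le_compat_l; [nra|]. unfold Rdiv. apply Rmult_le_compat_l; [lra|].
    apply Rinv_le_contravar; lra.
  - intros HMe. f_equal. f_equal.
    assert (Ht : M - K = s * Q / pr) by (rewrite HMe; ring).
    assert (Dn = c * F).
    { assert (alpha * K * (e - 1) / (M - K) = c * s * Q).
      { clearbody s c Q e F Dn. rewrite Ht.
        assert (Ha2 : alpha * K * (e - 1) = (c * s * Q) ^ 2 / (c * pr)) by (rewrite Hm; field; lra).
        rewrite Ha2. field. repeat split; lra. }
      rewrite H in HDn. rewrite Ht in HDn. assert (c * pr * (s * Q / pr) = c * s * Q) by (field; lra). lra. }
    lra.
Qed.

Lemma lub_bounds (S : R -> Prop) (z u : R) : S z -> (forall y, S y -> y <= u) ->
  z <= real (Lub_Rbar S) <= u.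
Proof.
  intros Hz Hu. destruct (Lub_Rbar_correct S) as [Hub Hl].
  specialize (Hub z Hz). specialize (Hl (Finite u) Hu).
  destruct (Lub_Rbar S); simpl in *; try tauto.
Qed.

Lemma K_upper_eq (N0 B T pr pd C0 G : R) : N0 > 0 -> B > 0 -> pr > 0 -> C0 > 0 -> G > 0 ->
  K_upper (G * pr / (N0 * B)) (G * pd / (N0 * B)) (G * C0 / N0) T =
  K_max T (pd / pr) (C0 * B / pr).
Proof.
  intros. unfold K_upper, K_max. f_equal; [f_equal|]; field; repeat split; lra.
Qed.

Lemma eta_bounds (alpha Rt N0 B T pr pd ps C0 G K0 W : R) :
  alpha > 0 -> Rt > 0 -> N0 > 0 -> B > 0 -> pr > 0 -> pd > 0 -> ps > 0 -> C0 > 0 -> G > 0 ->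
  1 <= K0 <= K_max T (pd / pr) (C0 * B / pr) -> 0 < W ->
  (forall K, 1 <= K <= K_max T (pd / pr) (C0 * B / pr) ->
     W <= FF Rt (pr + pd) ps (sG alpha pr N0 B G) K) ->
  B * Rt / FF Rt (pr + pd) ps (sG alpha pr N0 B G) K0
   <= eta'_csi Rt alpha N0 B T pr pd ps C0 G <= B * Rt / W.
Proof.
  intros Ha HR HN HB Hpr Hpd Hps HC HG HK0 HW HWle.
  set (s := sG alpha pr N0 B G).
  assert (Hs : 0 < s).
  { unfold s, sG. apply sqrt_lt_R0. apply Rdiv_lt_0_compat; [|lra].
    repeat apply Rmult_lt_0_compat; lra. }
  unfold eta'_csi, zeta'_csi.
  set (S := zeta_values _ _ _ _ _ _ _).
  set (M0 := K0 + s * Qf Rt K0 / pr).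
  pose proof (Qf_pos Rt K0 HR ltac:(lra)).
  assert (HM0 : M0 > K0).
  { unfold M0. assert (0 < s * Qf Rt K0 / pr) by (apply Rdiv_lt_0_compat; nra). lra. }
  set (z := zeta_csi M0 K0 Rt alpha (G * pr / (N0 * B)) (G * pd / (N0 * B)) (G * ps / (N0 * B))).
  destruct (zeta_val alpha Rt N0 B pr pd ps G M0 K0 Ha HR HN HB Hpr Hpd Hps HG ltac:(lra) HM0)
    as [_ Hz]. specialize (Hz eq_refl). fold s z in Hz.
  assert (HS : S z).
  { exists M0, K0. rewrite K_upper_eq by lra. repeat split; lra. }
  assert (Hub : forall y, S y -> y <= N0 / G * (B * Rt / W)).
  { intros y [M [K [H1 [H2 [H3 H4]]]]]. rewrite K_upper_eq in H2 by lra.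
    destruct (zeta_val alpha Rt N0 B pr pd ps G M K Ha HR HN HB Hpr Hpd Hps HG H1 H3) as [Hle _].
    fold s in Hle. rewrite <- H4 in Hle.
    specialize (HWle K (conj H1 H2)). fold s in HWle.
    assert (B * Rt / FF Rt (pr + pd) ps s K <= B * Rt / W).
    { unfold Rdiv. apply Rmult_le_compat_l; [nra|]. apply Rinv_le_contravar; lra. }
    replace y with (N0 / G * (G / N0 * y)) by (field; lra).
    apply Rmult_le_compat_l; [apply Rlt_le, Rdiv_lt_0_compat; lra|]. lra. }
  destruct (lub_bounds S z _ HS Hub) as [L1 L2].
  split.
  - rewrite <- Hz. apply Rmult_le_compat_l; [apply Rlt_le, Rdiv_lt_0_compat; lra|]. exact L1.
  - replace (B * Rt / W) with (G / N0 * (N0 / G * (B * Rt / W))) by (field; lra).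
    apply Rmult_le_compat_l; [apply Rlt_le, Rdiv_lt_0_compat; lra|]. exact L2.
Qed.

Lemma deriv_sandwich (E ph : R -> R) (x l : R) : is_derive ph x l ->
  (forall eta, 0 < eta -> exists del, 0 < del /\ forall y, Rabs (y - x) < del ->
     Rabs (E y - ph y) <= eta * Rabs (y - x)) ->
  is_derive E x l.
Proof.
  intros Hph HE. apply is_derive_Reals in Hph. apply is_derive_Reals.
  intros eps Heps.
  destruct (Hph (eps / 2) ltac:(lra)) as [d1 Hd1].
  destruct (HE (eps / 4) ltac:(lra)) as [d2 [Hd2 HEd]].
  assert (Hx : E x = ph x).
  { specialize (HEd x). replace (x - x) with 0 in HEd by ring. rewrite Rabs_R0 in HEd.
    assert (Rabs (E x - ph x) <= 0) by (rewrite <- (Rmult_0_r (eps/4)); apply HEd; lra).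
    pose proof (Rabs_pos (E x - ph x)).
    assert (Rabs (E x - ph x) = 0) by lra.
    apply Rabs_eq_0 in H1. lra. }
  assert (Hmin : 0 < Rmin d1 d2) by (apply Rmin_glb_lt; [apply cond_pos|lra]).
  exists (mkposreal _ Hmin). intros h Hh0 Hh. simpl in Hh.
  assert (Hh1 : Rabs h < d1) by (eapply Rlt_le_trans; [exact Hh|apply Rmin_l]).
  assert (Hh2 : Rabs h < d2) by (eapply Rlt_le_trans; [exact Hh|apply Rmin_r]).
  specialize (Hd1 h Hh0 Hh1).
  specialize (HEd (x + h)). replace (x + h - x) with h in HEd by ring.
  specialize (HEd Hh2).
  assert (Hpos : 0 < Rabs h) by (apply Rabs_pos_lt; auto).
  replace ((E (x + h) - E x) / h - l) with
     (((ph (x + h) - ph x) / h - l) + (E (x + h) - ph (x + h)) / h)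
     by (rewrite Hx; field; auto).
  eapply Rle_lt_trans; [apply Rabs_triang|].
  assert (Rabs ((E (x + h) - ph (x + h)) / h) <= eps / 4).
  { unfold Rdiv. rewrite Rabs_mult, Rabs_inv.
    apply Rle_trans with (eps / 4 * Rabs h * / Rabs h).
    - apply Rmult_le_compat_r; [apply Rlt_le, Rinv_0_lt_compat; lra|lra].
    - right. field. lra. }
  lra.
Qed.

Lemma alg_bound (BR F0 w ps t eta' Ls eta : R) : 0 < BR -> 0 < ps -> ps <= F0 ->
  0 <= w <= ps / 2 -> w <= 2 * eta' * Ls * t -> 0 < Ls ->
  eta' = eta * ps ^ 2 / (4 * BR * Ls) ->
  BR / (F0 - w) - BR / F0 <= eta * t.
Proof.
  intros HBR Hps HF0 Hw Hwt HLs Heta.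
  assert (HD : ps ^ 2 / 2 <= (F0 - w) * F0) by nra.
  assert (HDp : 0 < (F0 - w) * F0) by nra.
  replace (BR / (F0 - w) - BR / F0) with (BR * w * / ((F0 - w) * F0)) by (field; lra).
  apply Rle_trans with (BR * w * / (ps ^ 2 / 2)).
  - apply Rmult_le_compat_l; [nra|]. apply Rinv_le_contravar; [nra|lra].
  - replace (BR * w * / (ps ^ 2 / 2)) with (2 * BR / ps ^ 2 * w) by (field; lra).
    apply Rle_trans with (2 * BR / ps ^ 2 * (2 * eta' * Ls * t)).
    + apply Rmult_le_compat_l; [|lra]. apply Rlt_le, Rdiv_lt_0_compat; [lra|nra].
    + right. rewrite Heta. field. repeat split; lra.
Qed.

Lemma phi0_derive (C Q0 L BR G : R) : 0 < C -> 0 < Q0 -> 0 < L -> 0 < BR -> 0 < G ->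
  exists l, 0 < l /\ is_derive (fun G => BR / (2 * sqrt (C / G) * Q0 + L)) G l.
Proof.
  intros HC HQ HL HBR HG.
  assert (HCG : 0 < C / G) by (apply Rdiv_lt_0_compat; lra).
  pose proof (sqrt_lt_R0 _ HCG) as Hsq.
  set (den := 2 * sqrt (C / G) * Q0 + L).
  assert (Hden : 0 < den) by (unfold den; nra).
  exists (BR * (2 * Q0 * (C / G ^ 2) / (2 * sqrt (C / G))) / den ^ 2).
  split.
  - apply Rdiv_lt_0_compat; [|apply pow_lt; lra].
    apply Rmult_lt_0_compat; [lra|]. apply Rdiv_lt_0_compat; [|lra].
    apply Rmult_lt_0_compat; [lra|]. apply Rdiv_lt_0_compat; [lra|apply pow_lt; lra].
  - unfold den. auto_derive.
    + change (C * / G) with (C / G). repeat split; try lra. fold den. apply Rgt_not_eq; lra.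
    + change (C * / G) with (C / G). field. fold den. repeat split; try apply Rgt_not_eq; lra.
Qed.

Theorem theorem5 (alpha Rt N0 B Tc pr pd ps C0 Gc : R) :
  alpha > 1 -> Rt > 0 -> N0 > 0 -> B > 0 -> Tc > 0 -> B * Tc > 1 ->
  pr > 0 -> pd > 0 -> ps > 0 -> C0 > 0 ->
  K_max (B * Tc) (pd / pr) (C0 * B / pr) > 10 ->
  Gc > 0 ->
  Gc > N0 * B / pr * (alpha / (2 * (ps / pr))) ->
  Gc > N0 * B / pr * (3 * alpha / (4 * (1 + pd / pr) ^ 2 * Rt)
         * (g (4 * Rt / (3 * K_max (B * Tc) (pd / pr) (C0 * B / pr)))) ^ 2) ->
  Gc < N0 * B / pr * (alpha / ((1 + pd / pr) ^ 2 * Rt) * (g Rt) ^ 2) ->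
  ex_derive (eta'_csi Rt alpha N0 B (B * Tc) pr pd ps C0) Gc /\
  Derive (eta'_csi Rt alpha N0 B (B * Tc) pr pd ps C0) Gc > 0.
Proof.
  intros Ha HR HN HB HTc HT Hpr Hpd Hps HC0 HKm HG H1 H2 H3.
  set (Km := K_max (B * Tc) (pd / pr) (C0 * B / pr)) in *.
  set (kap := pr + pd).
  set (C := alpha * pr * N0 * B).
  assert (HCp : 0 < C) by (unfold C; repeat apply Rmult_lt_0_compat; lra).
  set (s0 := sG alpha pr N0 B Gc).
  assert (Hs02 : s0 ^ 2 = C / Gc).
  { unfold s0, sG. fold C. apply pow2_sqrt. apply Rlt_le, Rdiv_lt_0_compat; lra. }
  assert (Hs0 : 0 < s0).
  { unfold s0, sG. fold C. apply sqrt_lt_R0. apply Rdiv_lt_0_compat; lra. }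
  assert (Hkap : 0 < kap) by (unfold kap; lra).
  assert (HY : kap ^ 2 * Rt = pr ^ 2 * ((1 + pd / pr) ^ 2 * Rt)) by (unfold kap; field; lra).
  assert (Hb1 : 0 < 1 + pd / pr) by (assert (0 < pd / pr) by (apply Rdiv_lt_0_compat; lra); lra).
  assert (HYp : 0 < kap ^ 2 * Rt) by (apply Rmult_lt_0_compat; [apply pow_lt|]; lra).
  assert (Hpsi1 : 0 < psi Rt s0 kap 1).
  { unfold psi. replace (Rt / 1) with Rt by field. rewrite (phi_g Rt HR), Hs02.
    set (G2 := g Rt ^ 2) in *.
    assert (E3 : N0 * B / pr * (alpha / ((1 + pd / pr) ^ 2 * Rt) * G2) = C * G2 / (kap ^ 2 * Rt)).
    { rewrite HY. unfold C. field. repeat split; apply Rgt_not_eq; try lra; nra. }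
    rewrite E3 in H3.
    assert (Gc * (kap ^ 2 * Rt) < C * G2).
    { apply (Rmult_lt_compat_r (kap ^ 2 * Rt)) in H3; [|lra].
      replace (C * G2 / (kap ^ 2 * Rt) * (kap ^ 2 * Rt)) with (C * G2) in H3 by (field; lra). lra. }
    replace (C / Gc * G2 - kap ^ 2 * Rt) with ((C * G2 - Gc * (kap ^ 2 * Rt)) / Gc) by (field; lra).
    apply Rdiv_lt_0_compat; lra. }
  assert (HKm0 : 0 < Km) by lra.
  set (x1 := 4 * Rt / (3 * Km)) in *.
  assert (Hx1 : 0 < x1) by (unfold x1; apply Rdiv_lt_0_compat; lra).
  assert (HpsiKm : psi Rt s0 kap Km < 0).
  { unfold psi. rewrite Hs02.
    assert (Hx1e : x1 = 4 / 3 * (Rt / Km)) by (unfold x1; field; lra).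
    assert (HRK : 0 < Rt / Km) by (apply Rdiv_lt_0_compat; lra).
    assert (Hlt : Rt / Km < x1) by lra.
    assert (Hphi : phi (Rt / Km) < 3 / 4 * phi x1).
    { unfold phi. pose proof (hh_incr _ _ HRK Hlt). rewrite Hx1e at 1. assert (Rt / Km * hh (Rt / Km) < Rt / Km * hh x1) by (apply Rmult_lt_compat_l; lra). lra. }
    rewrite (phi_g x1 Hx1) in Hphi.
    set (G1 := g x1 ^ 2) in *.
    assert (E3 : N0 * B / pr * (3 * alpha / (4 * (1 + pd / pr) ^ 2 * Rt) * G1) = 3 / 4 * (C * G1) / (kap ^ 2 * Rt)).
    { rewrite HY. unfold C. field. repeat split; apply Rgt_not_eq; try lra; nra. }
    rewrite E3 in H2.
    assert (3 / 4 * (C * G1) < Gc * (kap ^ 2 * Rt)).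
    { apply (Rmult_lt_compat_r (kap ^ 2 * Rt)) in H2; [|lra].
      replace (3 / 4 * (C * G1) / (kap ^ 2 * Rt) * (kap ^ 2 * Rt)) with (3 / 4 * (C * G1)) in H2 by (field; lra). lra. }
    assert (HCG : 0 < C / Gc) by (apply Rdiv_lt_0_compat; lra).
    assert (C / Gc * phi (Rt / Km) < C / Gc * (3 / 4 * G1)) by (apply Rmult_lt_compat_l; lra).
    assert (C / Gc * (3 / 4 * G1) = 3 / 4 * (C * G1) / Gc) by (field; lra).
    assert (3 / 4 * (C * G1) / Gc < kap ^ 2 * Rt).
    { apply (Rmult_lt_reg_r Gc); [lra|]. replace (3 / 4 * (C * G1) / Gc * Gc) with (3 / 4 * (C * G1)) by (field; lra). lra. }
    lra.
  }
  destruct (K0_exists Rt s0 kap Km HR Hs0 ltac:(lra) Hpsi1 HpsiKm) as [K0 [HK0 Hpsi0]].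
  assert (HQ0 : 0 < Qf Rt K0) by (apply Qf_pos; lra).
  set (Q0 := Qf Rt K0) in *.
  assert (HBR : 0 < B * Rt) by (apply Rmult_lt_0_compat; lra).
  set (BR := B * Rt) in *.
  set (ph := fun G => BR / (2 * sqrt (C / G) * Q0 + (kap * K0 + ps))).
  assert (Hph : forall G, ph G = BR / FF Rt kap ps (sG alpha pr N0 B G) K0).
  { intros G. unfold ph, FF, sG, C, Q0. f_equal. ring. }
  destruct (phi0_derive C Q0 (kap * K0 + ps) BR Gc HCp HQ0 ltac:(nra) HBR HG) as [l [Hl Hder]].
  fold ph in Hder.
  set (sf := fun G => sqrt (C / G)).
  assert (Hsf : ex_derive sf Gc).
  { unfold sf. auto_derive. repeat split; try lra. apply Rdiv_lt_0_compat; lra. }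
  destruct (loc_lip sf Gc _ (Derive_correct _ _ Hsf)) as [ds [Hds Hlip]].
  set (Ls := Rabs (Derive sf Gc) + 1) in *.
  assert (HLs : 0 < Ls) by (unfold Ls; pose proof (Rabs_pos (Derive sf Gc)); lra).
  assert (Hsfs : forall G, sf G = sG alpha pr N0 B G) by (intros; reflexivity).
  assert (Hmain : forall eta, 0 < eta -> exists del, 0 < del /\ forall G, Rabs (G - Gc) < del ->
     Rabs (eta'_csi Rt alpha N0 B (B * Tc) pr pd ps C0 G - ph G) <= eta * Rabs (G - Gc)).
  { intros eta Heta.
    set (eta' := eta * ps ^ 2 / (4 * BR * Ls)).
    assert (Heta' : 0 < eta').
    { unfold eta'. apply Rdiv_lt_0_compat; [apply Rmult_lt_0_compat; [lra|apply pow_lt; lra]|].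
      apply Rmult_lt_0_compat; lra. }
    destruct (core Rt kap ps s0 K0 Km HR Hs0 Hkap Hpsi0 HK0 eta' Heta') as [dc [Hdc Hcore]].
    set (del := Rmin (Rmin Gc ds) (Rmin (dc / Ls) (ps / (4 * eta' * Ls)))).
    assert (Hdel : 0 < del).
    { unfold del. apply Rmin_glb_lt; apply Rmin_glb_lt; try lra; apply Rdiv_lt_0_compat; try lra.
      apply Rmult_lt_0_compat; lra. }
    exists del. split; [exact Hdel|].
    intros G HGd.
    assert (Hd1 : Rabs (G - Gc) < Gc) by (eapply Rlt_le_trans; [exact HGd|]; unfold del;
        eapply Rle_trans; [apply Rmin_l|apply Rmin_l]).
    assert (Hd2 : Rabs (G - Gc) < ds) by (eapply Rlt_le_trans; [exact HGd|]; unfold del;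
        eapply Rle_trans; [apply Rmin_l|apply Rmin_r]).
    assert (Hd3 : Rabs (G - Gc) < dc / Ls) by (eapply Rlt_le_trans; [exact HGd|]; unfold del;
        eapply Rle_trans; [apply Rmin_r|apply Rmin_l]).
    assert (Hd4 : Rabs (G - Gc) < ps / (4 * eta' * Ls)) by (eapply Rlt_le_trans; [exact HGd|]; unfold del;
        eapply Rle_trans; [apply Rmin_r|apply Rmin_r]).
    assert (HGp : 0 < G).
    { pose proof (Rle_abs (Gc - G)). rewrite Rabs_minus_sym in Hd1. lra. }
    set (s := sG alpha pr N0 B G).
    assert (Hss : Rabs (s - s0) <= Ls * Rabs (G - Gc)).
    { specialize (Hlip G Hd2). rewrite !Hsfs in Hlip. exact Hlip. }
    pose proof (Rabs_pos (G - Gc)) as HaG.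
    pose proof (Rabs_pos (s - s0)) as Has.
    assert (Hsd : Rabs (s - s0) < dc).
    { apply Rle_lt_trans with (Ls * Rabs (G - Gc)); [exact Hss|].
      apply Rlt_le_trans with (Ls * (dc / Ls)).
      - apply Rmult_lt_compat_l; lra.
      - right. field. lra. }
    set (w := 2 * eta' * Rabs (s - s0)).
    assert (Hw1 : w <= 2 * eta' * Ls * Rabs (G - Gc)).
    { unfold w. assert (2 * eta' * Rabs (s - s0) <= 2 * eta' * (Ls * Rabs (G - Gc)))
        by (apply Rmult_le_compat_l; lra). lra. }
    assert (Hw2 : w <= ps / 2).
    { apply Rle_trans with (2 * eta' * Ls * Rabs (G - Gc)); [exact Hw1|].
      apply Rle_trans with (2 * eta' * Ls * (ps / (4 * eta' * Ls))).
      - apply Rmult_le_compat_l; [|lra]. apply Rlt_le; apply Rmult_lt_0_compat; [apply Rmult_lt_0_compat|]; lra.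
      - right. field. split; lra. }
    assert (Hw0 : 0 <= w) by (unfold w; apply Rmult_le_pos; lra).
    set (F0 := FF Rt kap ps s K0).
    assert (HF0 : ps <= F0).
    { unfold F0, FF. pose proof (sqrt_pos (alpha * pr * N0 * B / G)).
      fold (sG alpha pr N0 B G) in H. fold s in H. fold Q0. nra. }
    assert (HW : 0 < F0 - w) by lra.
    destruct (eta_bounds alpha Rt N0 B (B * Tc) pr pd ps C0 G K0 (F0 - w)
      ltac:(lra) HR HN HB Hpr Hpd Hps HC0 HGp ltac:(fold Km; lra) HW) as [Lo Up].
    { intros K HK. fold Km in HK. fold kap s. unfold F0, w.
      apply Hcore; [exact Hsd | exact HK]. }
    fold kap s F0 BR in Lo. fold BR in Up.
    rewrite Hph. fold kap s F0.
    rewrite Rabs_pos_eq by lra.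
    pose proof (alg_bound BR F0 w ps (Rabs (G - Gc)) eta' Ls eta HBR Hps HF0
      ltac:(lra) Hw1 HLs eq_refl).
    lra. }
  pose proof (deriv_sandwich _ _ Gc l Hder Hmain) as HD.
  split.
  - exists l. exact HD.
  - rewrite (is_derive_unique _ _ _ HD). lra.
Qed.
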